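(* Let $C\in\mathbb R^3$ be a unit vector and $\Delta=\{(x\cdot y,\ x\cdot C,\ y\cdot C): x,y\in\mathbb S^2\}\subset\mathbb R^3$. For any two distinct points $v,w$ of $V=\{(1,1,1),(1,-1,-1),(-1,1,-1),(-1,-1,1)\}$, the closed line segment from $v$ to $w$ is contained in the boundary $\partial\Delta$. In particular $\partial\Delta$ contains the $1$-skeleton of the regular tetrahedron with vertex set $V$.
   Context: $\mathbb S^2$ is the unit sphere in $\mathbb R^3$ and $\cdot$ is the Euclidean inner product. *)

(* Defs.v *)
From Stdlib Require Import Reals Lra.
Open Scope R_scope.

Definition vec3 : Type := (R * R * R)%type.

Definition mk3 (a b c : R) : vec3 := (a, b, c).
Definition vx (v : vec3) : R := fst (fst v).
Definition vy (v : vec3) : R := snd (fst v).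
Definition vz (v : vec3) : R := snd v.

Definition dot (u v : vec3) : R := vx u * vx v + vy u * vy v + vz u * vz v.

Definition norm3 (v : vec3) : R := sqrt (dot v v).
Definition dist3 (u v : vec3) : R :=
  norm3 (mk3 (vx u - vx v) (vy u - vy v) (vz u - vz v)).

Definition on_sphere (x : vec3) : Prop := dot x x = 1.

Definition DeltaSet (C : vec3) (p : vec3) : Prop :=
  exists x y : vec3, on_sphere x /\ on_sphere y /\
    p = mk3 (dot x y) (dot x C) (dot y C).

Definition in_boundary (S : vec3 -> Prop) (p : vec3) : Prop :=
  forall eps : R, 0 < eps ->
    (exists q, S q /\ dist3 p q < eps) /\
    (exists q, ~ S q /\ dist3 p q < eps).

Definition tetV (v : vec3) : Prop :=
  v = mk3 1 1 1 \/ v = mk3 1 (-1) (-1) \/ v = mk3 (-1) 1 (-1) \/ v = mk3 (-1) (-1) 1.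

Definition seg_pt (v w : vec3) (t : R) : vec3 :=
  mk3 ((1 - t) * vx v + t * vx w) ((1 - t) * vy v + t * vy w) ((1 - t) * vz v + t * vz w).

(* Main.v *)
Require Import Defs.
From Stdlib Require Import Reals Lra Psatz.
Open Scope R_scope.

Lemma dot_bound x y : on_sphere x -> on_sphere y -> -1 <= dot x y <= 1.
Proof.
  destruct x as [[x1 x2] x3], y as [[y1 y2] y3]; unfold on_sphere, dot, vx, vy, vz; simpl.
  intros H1 H2;
  pose proof (pow2_ge_0 (x1-y1)); pose proof (pow2_ge_0 (x2-y2)); pose proof (pow2_ge_0 (x3-y3));
  pose proof (pow2_ge_0 (x1+y1)); pose proof (pow2_ge_0 (x2+y2)); pose proof (pow2_ge_0 (x3+y3));
  split; nra.
Qed.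

Lemma orth C : exists u, dot u u = 1 /\ dot u C = 0.
Proof.
  destruct C as [[c1 c2] c3].
  destruct (Req_dec (c2*c2+c3*c3) 0) as [E|E].
  - assert (c2 = 0) by nra.
    exists (mk3 0 1 0); unfold dot, mk3, vx, vy, vz; simpl; split; [lra|subst; lra].
  - assert (Hp : 0 < c2*c2+c3*c3) by nra.
    set (r := sqrt (c2*c2+c3*c3)).
    assert (Hr : r * r = c2*c2+c3*c3) by (apply sqrt_sqrt; lra).
    assert (Hr0 : r <> 0) by (intro Z; rewrite Z in Hr; lra).
    exists (mk3 0 (c3/r) (-c2/r)); unfold dot, mk3, vx, vy, vz; simpl; split.
    + replace (0*0 + c3/r*(c3/r) + -c2/r*(-c2/r)) with ((c2*c2+c3*c3)/(r*r)) by (field; auto).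
      rewrite Hr; field; lra.
    + field; auto.
Qed.

Lemma exists_y C s : dot C C = 1 -> -1 <= s <= 1 -> exists y, on_sphere y /\ dot y C = s.
Proof.
  intros hC hs. destruct (orth C) as [u [Hu1 Hu2]].
  set (r := sqrt (1 - s*s)).
  assert (Hr : r * r = 1 - s*s) by (apply sqrt_sqrt; nra).
  exists (mk3 (s * vx C + r * vx u) (s * vy C + r * vy u) (s * vz C + r * vz u)).
  destruct C as [[c1 c2] c3], u as [[u1 u2] u3].
  unfold on_sphere, dot, mk3, vx, vy, vz in *; simpl in *; split.
  - transitivity (s*s*(c1*c1+c2*c2+c3*c3) + 2*s*r*(u1*c1+u2*c2+u3*c3) + r*r*(u1*u1+u2*u2+u3*u3)).
    + ring.
    + rewrite hC, Hu1, Hu2, Hr; ring.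
  - transitivity (s*(c1*c1+c2*c2+c3*c3) + r*(u1*c1+u2*c2+u3*c3)).
    + ring.
    + rewrite hC, Hu2; ring.
Qed.

Lemma neg_sphere x : on_sphere x -> on_sphere (mk3 (- vx x) (- vy x) (- vz x)).
Proof. destruct x as [[a b] c]; unfold on_sphere, dot, mk3, vx, vy, vz; simpl; lra. Qed.

Ltac dsimpl := unfold on_sphere, dot, mk3, vx, vy, vz in *; simpl in *.

Lemma bnd C p : dot C C = 1 -> DeltaSet C p ->
  (vx p = 1 \/ vx p = -1 \/ vy p = 1 \/ vy p = -1 \/ vz p = 1 \/ vz p = -1) ->
  in_boundary (DeltaSet C) p.
Proof.
  intros hC hp hc eps he. split.
  - exists p; split; auto. unfold dist3, norm3.
    replace (dot _ _) with 0 by (dsimpl; ring). rewrite sqrt_0; lra.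
  - destruct p as [[a b] c].
    assert (K : forall q, DeltaSet C q -> -1 <= vx q <= 1 /\ -1 <= vy q <= 1 /\ -1 <= vz q <= 1).
    { intros q [x [y [hx [hy ->]]]]. unfold mk3, vx, vy, vz; simpl.
      split; [|split]; apply dot_bound; auto. }
    set (d := eps/2).
    assert (D : forall q, dot (mk3 (a - vx q) (b - vy q) (c - vz q))
                              (mk3 (a - vx q) (b - vy q) (c - vz q)) = d*d ->
                dist3 (a,b,c) q < eps).
    { intros q Hq. unfold dist3, norm3. replace (dot _ _) with (d*d) by (rewrite <- Hq; reflexivity).
      rewrite sqrt_square; unfold d; lra. }
    simpl in hc.
    destruct hc as [h|[h|[h|[h|[h|h]]]]]; cbn in h; subst.
    + exists (mk3 (1+d) b c); split; [intro Q; apply K in Q; dsimpl; unfold d in *; lra|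
        apply D; dsimpl; ring].
    + exists (mk3 (-1-d) b c); split; [intro Q; apply K in Q; dsimpl; unfold d in *; lra|
        apply D; dsimpl; ring].
    + exists (mk3 a (1+d) c); split; [intro Q; apply K in Q; dsimpl; unfold d in *; lra|
        apply D; dsimpl; ring].
    + exists (mk3 a (-1-d) c); split; [intro Q; apply K in Q; dsimpl; unfold d in *; lra|
        apply D; dsimpl; ring].
    + exists (mk3 a b (1+d)); split; [intro Q; apply K in Q; dsimpl; unfold d in *; lra|
        apply D; dsimpl; ring].
    + exists (mk3 a b (-1-d)); split; [intro Q; apply K in Q; dsimpl; unfold d in *; lra|
        apply D; dsimpl; ring].
Qed.

Lemma mem1 C p : dot C C = 1 -> vx p = 1 -> vy p = vz p -> -1 <= vy p <= 1 -> DeltaSet C p.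
Proof.
  destruct p as [[a b] c]; cbn; intros hC h1 h2 h3; subst.
  destruct (exists_y C c hC h3) as [y [hy hyc]].
  exists y, y; repeat split; auto. rewrite hy, hyc; reflexivity.
Qed.

Lemma mem2 C p : dot C C = 1 -> vy p = 1 -> vx p = vz p -> -1 <= vx p <= 1 -> DeltaSet C p.
Proof.
  destruct p as [[a b] c]; cbn; intros hC h1 h2 h3; subst.
  destruct (exists_y C c hC h3) as [y [hy hyc]].
  exists C, y; repeat split; auto. rewrite hC, hyc.
  replace (dot C y) with (dot y C) by (unfold dot; ring). rewrite hyc; reflexivity.
Qed.

Lemma mem3 C p : dot C C = 1 -> vz p = 1 -> vx p = vy p -> -1 <= vx p <= 1 -> DeltaSet C p.
Proof.
  destruct p as [[a b] c]; cbn; intros hC h1 h2 h3; subst.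
  destruct (exists_y C b hC h3) as [x [hx hxc]].
  exists x, C; repeat split; auto. rewrite hC, hxc; reflexivity.
Qed.

Lemma mem4 C p : dot C C = 1 -> vz p = -1 -> vx p = - vy p -> -1 <= vy p <= 1 -> DeltaSet C p.
Proof.
  destruct p as [[a b] c]; cbn; intros hC h1 h2 h3; subst.
  destruct (exists_y C b hC h3) as [x [hx hxc]].
  exists x, (mk3 (- vx C) (- vy C) (- vz C)); repeat split; auto.
  - apply neg_sphere; auto.
  - revert hC hxc. destruct C as [[c1 c2] c3], x as [[x1 x2] x3]. unfold mk3, dot, vx, vy, vz; cbn.
    intros hC hxc. f_equal; [f_equal|]; lra.
Qed.

Lemma mem5 C p : dot C C = 1 -> vy p = -1 -> vx p = - vz p -> -1 <= vz p <= 1 -> DeltaSet C p.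
Proof.
  destruct p as [[a b] c]; cbn; intros hC h1 h2 h3; subst.
  destruct (exists_y C c hC h3) as [y [hy hyc]].
  exists (mk3 (- vx C) (- vy C) (- vz C)), y; repeat split; auto.
  - apply neg_sphere; auto.
  - revert hC hyc. destruct C as [[c1 c2] c3], y as [[y1 y2] y3]. unfold mk3, dot, vx, vy, vz; cbn.
    intros hC hyc. f_equal; [f_equal|]; lra.
Qed.

Lemma mem6 C p : dot C C = 1 -> vx p = -1 -> vz p = - vy p -> -1 <= vy p <= 1 -> DeltaSet C p.
Proof.
  destruct p as [[a b] c]; cbn; intros hC h1 h2 h3; subst.
  destruct (exists_y C b hC h3) as [x [hx hxc]].
  exists x, (mk3 (- vx x) (- vy x) (- vz x)); repeat split; auto.
  - apply neg_sphere; auto.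
  - revert hx hxc. destruct C as [[c1 c2] c3], x as [[x1 x2] x3]. unfold on_sphere, mk3, dot, vx, vy, vz; cbn.
    intros hx hxc. f_equal; [f_equal|]; lra.
Qed.

Ltac disj := first [ left; cbn; lra | right; disj | cbn; lra ].

Theorem mainTheorem7 (Cvec : vec3) (hC : dot Cvec Cvec = 1) (v w : vec3)
  (hv : tetV v) (hw : tetV w) (hvw : v <> w) (t : R) (ht0 : 0 <= t) (ht1 : t <= 1) :
  in_boundary (DeltaSet Cvec) (seg_pt v w t).
Proof.
  unfold tetV in hv, hw.
  destruct hv as [ -> | [ -> | [ -> | -> ]]]; destruct hw as [ -> | [ -> | [ -> | -> ]]];
    try (exfalso; apply hvw; reflexivity);
  (apply bnd; [ exact hC | first [ apply mem1; auto; cbn; lra | apply mem2; auto; cbn; lra | apply mem3; auto; cbn; lra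
          | apply mem4; auto; cbn; lra | apply mem5; auto; cbn; lra | apply mem6; auto; cbn; lra ]
  | disj ]).
Qed.
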